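(* Let $k = \mathbf{Q}$. Write the polynomials $A, \dots, F \in \mathbf{Q}[x_0,x_1,x_2]$ as \begin{align*} A & = A_1 x_0^2 + A_2 x_0x_1 + A_3 x_0x_2 + A_4 x_1^2 + A_5x_1x_2 + A_6 x_2^2,\\ B & = B_1 x_0^2 + B_2 x_0x_1 + B_3 x_0x_2 + B_4 x_1^2 + B_5x_1x_2 + B_6 x_2^2,\\ C & = C_1 x_0^2 + C_2 x_0x_1 + C_3 x_0x_2 + C_4 x_1^2 + C_5x_1x_2 + C_6 x_2^2,\\ D & = D_1 x_0^2 + D_2 x_0x_1 + D_3 x_0x_2 + D_4 x_1^2 + D_5x_1x_2 + D_6 x_2^2,\\ E & = E_1 x_0^2 + E_2 x_0x_1 + E_3 x_0x_2 + E_4 x_1^2 + E_5x_1x_2 + E_6 x_2^2,\\ F & = F_1 x_0^2 + F_2 x_0x_1 + F_3 x_0x_2 + F_4 x_1^2 + F_5x_1x_2 + F_6 x_2^2. \end{align*} Suppose the coefficients satisfy: (1) the $2$-adic valuation of $A_1, B_1, C_6, D_4, E_4, F_6$ is $0$; (2) the $2$-adic valuation of all other coefficients is $>0$. Then $\mathrm{inv}_2\, \alpha_1(x) = 0$ for all $x \in X_1(\mathbf{Q}_2)$.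
   Context: Let $Z \subset \mathbf{P}^2 \times \mathbf{P}^2$ (coordinates $x_0,x_1,x_2$ and $y_0,y_1,y_2$) be a smooth divisor of bidegree $(2,2)$ with equation $A y_0^2 + B y_0y_1 + C y_0y_2 + D y_1^2 + E y_1y_2 + F y_2^2$, where $A,\dots,F$ are quadratic forms in $x_0,x_1,x_2$. Let $Y \to \mathbf{P}^2\times\mathbf{P}^2$ be the double cover branched along $Z$; projection to the first factor makes $Y$ a quadric surface fibration over $\mathbf{P}^2$, whose discriminant curve $D_1$ is the sextic $\det M = 0$ with $M = \begin{pmatrix} 2A & B & C\\ B & 2D & E \\ C & E & 2F\end{pmatrix}$. Assume $D_1$ is smooth. Then $X_1$ is the K3 surface $w^2 = -\tfrac12 \det M$ in $\mathbf{P}(1,1,1,3)$ (double cover of $\mathbf{P}^2$ branched along $D_1$), and $\alpha_1 \in \mathrm{Br}(X_1)$ is the Brauer class of the Azumaya algebra coming from the Stein factorization of the relative Fano variety of lines of the fibration. In the function field, $\alpha_1$ is represented by each of the Hilbert symbols $(B^2-4AD, A)$, $(E^2-4DF, D)$, $(C^2-4AF, F)$. $\mathrm{inv}_2: \mathrm{Br}(\mathbf{Q}_2) \to \mathbf{Q}/\mathbf{Z}$ is the local invariant. *)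

(* Defs.v *)
From HB Require Import structures.
From mathcomp Require Import all_boot all_order all_algebra.
From mathcomp Require Import algC.
From mathcomp Require Import mpoly.
Set Implicit Arguments. Unset Strict Implicit. Unset Printing Implicit Defensive.
Import Order.TTheory GRing.Theory Num.Theory.
Local Open Scope ring_scope.

(* The paper's A_1,...,A_6 is  A 0, ..., A 5  (index shifted by one):  *)
(*   c 0 x0^2 + c 1 x0x1 + c 2 x0x2 + c 3 x1^2 + c 4 x1x2 + c 5 x2^2   *)
Definition quadform (n : nat) (c : 'I_6 -> rat) (i0 i1 i2 : 'I_n) : {mpoly rat[n]} :=
  (c (inord 0))%:MP * 'X_i0 * 'X_i0 + (c (inord 1))%:MP * 'X_i0 * 'X_i1
  + (c (inord 2))%:MP * 'X_i0 * 'X_i2 + (c (inord 3))%:MP * 'X_i1 * 'X_i1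
  + (c (inord 4))%:MP * 'X_i1 * 'X_i2 + (c (inord 5))%:MP * 'X_i2 * 'X_i2.

Definition q3 (c : 'I_6 -> rat) : {mpoly rat[3]} := quadform c (inord 0) (inord 1) (inord 2).

(* The bidegree (2,2) form defining Z in P^2 x P^2; variables
   0,1,2 = x0,x1,x2 and 3,4,5 = y0,y1,y2. *)
Definition Zpoly (A B C D E F : 'I_6 -> rat) : {mpoly rat[6]} :=
  let x0 : 'I_6 := inord 0 in let x1 : 'I_6 := inord 1 in let x2 : 'I_6 := inord 2 in
  let y0 : {mpoly rat[6]} := 'X_(inord 3) in
  let y1 : {mpoly rat[6]} := 'X_(inord 4) in
  let y2 : {mpoly rat[6]} := 'X_(inord 5) in
  quadform A x0 x1 x2 * y0 * y0 + quadform B x0 x1 x2 * y0 * y1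
  + quadform C x0 x1 x2 * y0 * y2 + quadform D x0 x1 x2 * y1 * y1
  + quadform E x0 x1 x2 * y1 * y2 + quadform F x0 x1 x2 * y2 * y2.

Definition Mmat (A B C D E F : 'I_6 -> rat) : 'M[{mpoly rat[3]}]_3 :=
  \matrix_(i < 3, j < 3)
    match val i, val j with
    | 0, 0 => 2%:R * q3 A | 0, 1 => q3 B | 0, _ => q3 C
    | 1, 0 => q3 B | 1, 1 => 2%:R * q3 D | 1, _ => q3 E
    | _, 0 => q3 C | _, 1 => q3 E | _, _ => 2%:R * q3 F
    end.

Definition disc_sextic (A B C D E F : 'I_6 -> rat) : {mpoly rat[3]} := \det (Mmat A B C D E F).

Definition ratC (q : rat) : algC := ratr q.

Definition plane_curve_smooth (P : {mpoly rat[3]}) : Prop :=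
  ~ exists x : 'I_3 -> algC,
      (exists i, x i != 0) /\
      (map_mpoly ratC P).@[x] = 0 /\
      (forall i : 'I_3, (map_mpoly ratC (mderiv i P)).@[x] = 0).

Definition biproj_hypersurface_smooth (G : {mpoly rat[6]}) : Prop :=
  ~ exists p : 'I_6 -> algC,
      (exists i : 'I_6, (i < 3)%N /\ p i != 0) /\
      (exists i : 'I_6, (3 <= i)%N /\ p i != 0) /\
      (map_mpoly ratC G).@[p] = 0 /\
      (forall i : 'I_6, (map_mpoly ratC (mderiv i G)).@[p] = 0).

Definition v2_zero (q : rat) : Prop :=
  q != 0 /\ ~~ (2 %| numq q)%Z /\ ~~ (2 %| denq q)%Z.
(* v_2(q) > 0  (including q = 0, of valuation +oo) *)
Definition v2_pos (q : rat) : Prop :=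
  (2 %| numq q)%Z /\ ~~ (2 %| denq q)%Z.

Definition in2n (n : nat) (q : rat) : bool :=
  (((2 ^ n)%N)%:Z %| numq q)%Z && ~~ (2 %| denq q)%Z.

(* The 2-adic integers Z_2 = lim Z/2^n: an element is represented by a *)
(* sequence of integers a with a (n+1) = a n  mod 2^n.                 *)
(* For a polynomial P with coefficients in Z_(2), P(a) = 0 in Z_2 iff  *)
(* P(a n) lies in 2^n Z_(2) for all n.                                  *)
Definition z2 := nat -> int.
Definition z2_compat (a : z2) : Prop :=
  forall n, (a n.+1 == a n %[mod ((2 ^ n)%N)%:Z])%Z.
Definition z2_unit (a : z2) : Prop := ~~ (2 %| a 1%N)%Z.

(* an element of Z_2 given as the (compatible) sequence of its
   rational approximations u n in Z_(2): zero iff u n in 2^n Z_(2) *)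
Definition z2val_zero (u : nat -> rat) : Prop := forall n, in2n n (u n).

Definition evalz2 (P : {mpoly rat[3]}) (x : 'I_3 -> z2) : nat -> rat :=
  fun n => P.@[fun i => ((x i n)%:~R : rat)].

(* The Hilbert symbol (u,v)_2 of two nonzero elements u, v of Z_2 is 1,
   i.e. the quaternion algebra (u,v) over Q_2 splits, i.e. its invariant
   inv_2 is 0: the conic  r^2 = u p^2 + v q^2  has a Q_2-point, i.e. a
   primitive Z_2-point. *)
Definition inv2_quat_zero (u v : nat -> rat) : Prop :=
  exists p q r : z2,
    [/\ z2_compat p, z2_compat q, z2_compat r,
        z2_unit p \/ z2_unit q \/ z2_unit r &
        forall n, in2n n ((r n)%:~R ^+ 2 - u n * (p n)%:~R ^+ 2 - v n * (q n)%:~R ^+ 2)].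

(* Q_2-points of X_1 :  w^2 = -1/2 det M  in P(1,1,1,3).  Every Q_2-point
   has a representative (x0:x1:x2:w) with x in Z_2^3 primitive and w in Z_2. *)
Definition X1_Q2_point (A B C D E F : 'I_6 -> rat) (x : 'I_3 -> z2) (w : z2) : Prop :=
  [/\ forall i, z2_compat (x i), z2_compat w, (exists i, z2_unit (x i)) &
      forall n, in2n n ((w n)%:~R ^+ 2 + 2%:R^-1 * evalz2 (disc_sextic A B C D E F) x n)].

(* alpha_1 is represented in the function field by the Hilbert symbol (f,g);
   at a Q_2-point x where f(x), g(x) are both nonzero, (f,g) is Azumaya near x
   and alpha_1(x) is the class of the quaternion algebra (f(x), g(x)). *)
Definition rep_inv_zero_at (f g : {mpoly rat[3]}) (x : 'I_3 -> z2) : Prop :=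
  ~ z2val_zero (evalz2 f x) -> ~ z2val_zero (evalz2 g x) ->
  inv2_quat_zero (evalz2 f x) (evalz2 g x).

Definition alpha1_inv_zero_at (A B C D E F : 'I_6 -> rat) (x : 'I_3 -> z2) : Prop :=
  [/\ rep_inv_zero_at (q3 B ^+ 2 - 4%:R * q3 A * q3 D) (q3 A) x,
      rep_inv_zero_at (q3 E ^+ 2 - 4%:R * q3 D * q3 F) (q3 D) x &
      rep_inv_zero_at (q3 C ^+ 2 - 4%:R * q3 A * q3 F) (q3 F) x].

(* Main.v *)
Require Import Defs.
From mathcomp Require Import all_boot all_order all_algebra.
From mathcomp Require Import algC mpoly.
From mathcomp Require Import ring lra zify.
From Stdlib Require Import Classical ClassicalEpsilon FunctionalExtensionality.
Set Implicit Arguments. Unset Strict Implicit. Unset Printing Implicit Defensive.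
Import Order.TTheory GRing.Theory Num.Theory.
Local Open Scope ring_scope.



Definition J (n : nat) (q : rat) : Prop :=
  exists (m : int) (d : nat), odd d /\ q * d%:R = 2 ^+ n * m%:~R.

Lemma J0 n : J n 0.
Proof. by exists 0, 1%N; split=> //; rewrite mul0r mulr0. Qed.

Lemma J_add n x y : J n x -> J n y -> J n (x + y).
Proof.
case=> m1 [d1 [o1 e1]] [m2 [d2 [o2 e2]]].
exists (m1 * d2%:Z + m2 * d1%:Z), (d1 * d2)%N; split; first by rewrite oddM o1 o2.
rewrite natrM intrD !intrM -!pmulrn.
transitivity ((x * d1%:R) * d2%:R + (y * d2%:R) * d1%:R); first by ring.
rewrite e1 e2; ring.
Qed.

Lemma J_opp n x : J n x -> J n (- x).
Proof.
case=> m [d [o e]]; exists (- m), d; split => //.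
by rewrite mulNr e rmorphN /= mulrN.
Qed.

Lemma J_sub n x y : J n x -> J n y -> J n (x - y).
Proof. by move=> hx hy; apply: J_add hx (J_opp hy). Qed.

Lemma J_mul n k x y : J n x -> J k y -> J (n + k) (x * y).
Proof.
case=> m1 [d1 [o1 e1]] [m2 [d2 [o2 e2]]].
exists (m1 * m2), (d1 * d2)%N; split; first by rewrite oddM o1 o2.
rewrite natrM intrM exprD.
transitivity ((x * d1%:R) * (y * d2%:R)); first by ring.
rewrite e1 e2; ring.
Qed.

Lemma J_mono n k x : (n <= k)%N -> J k x -> J n x.
Proof.
move=> nk [m [d [o e]]]; exists (m * 2 ^+ (k - n)), d; split => //.
by rewrite e rmorphM rmorphXn /= -(subnKC nk) exprD addKn; ring.
Qed.

Lemma J_int (z : int) : J 0 z%:~R.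
Proof. by exists z, 1%N; split=> //; rewrite mulr1 expr0 mul1r. Qed.

Lemma J_pow n : J n (2 ^+ n).
Proof. by exists 1, 1%N; split=> //; rewrite !mulr1. Qed.

Lemma J_mulr n c x : J 0 c -> J n x -> J n (c * x).
Proof. by move=> hc hx; have := J_mul hc hx; rewrite add0n. Qed.

Lemma J_mull n c x : J 0 c -> J n x -> J n (x * c).
Proof. by move=> hc hx; rewrite mulrC; apply: J_mulr. Qed.

Lemma J_2div k n x : J (k + n) x -> J n (x / 2 ^+ k).
Proof.
case=> m [d [o e]]; exists m, d; split => //.
have h2 : (2 ^+ k : rat) != 0 by rewrite expf_neq0.
rewrite mulrAC e exprD; field; exact: h2.
Qed.

Lemma J_2mul n k y : J n y -> J (k + n) (2 ^+ k * y).
Proof. by move=> h; apply: J_mul (J_pow k) h. Qed.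

Lemma intr_eq (a b : int) : (a%:~R : rat) = b%:~R -> a = b.
Proof. exact: intr_inj. Qed.

Lemma J_split k x : J k x -> ~ J k.+1 x -> J k.+1 (x - 2 ^+ k).
Proof.
case=> m [d [o e]] hn.
have mo : ~~ (2 %| m)%Z.
  apply/negP => /dvdzP [t ht]; apply: hn; exists t, d; split => //.
  by rewrite e ht rmorphM /= exprS; ring.
exists ((m - d%:Z) %/ 2)%Z, d; split => //.
have ht : (m - d%:Z) = ((m - d%:Z) %/ 2)%Z * 2 by lia.
have hq : (m%:~R - d%:R : rat) = ((m - d%:Z) %/ 2)%Z%:~R * 2.
  by rewrite pmulrn -rmorphB /= {1}ht rmorphM.
rewrite mulrBl e exprS.
transitivity (2 ^+ k * (m%:~R - d%:R) : rat); first by ring.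
rewrite hq; ring.
Qed.

Lemma J_not1 : ~ J 1 1.
Proof.
case=> m [d [o e]]; move: e; rewrite mul1r expr1 pmulrn.
have -> : (2 : rat) * m%:~R = (2 * m)%:~R by rewrite rmorphM.
move/intr_eq => h; lia.
Qed.

Lemma in2nP n q : in2n n q <-> J n q.
Proof.
split.
  move/andP=> [h1 h2]; case/dvdzP: h1 => k hk.
  exists k, `|denq q|%N; split; first by lia.
  have -> : (`|denq q|%N%:R : rat) = (denq q)%:~R.
    by rewrite pmulrn gez0_abs // ltW // denq_gt0.
  by rewrite -numqE hk rmorphM /= -pmulrn natrX mulrC.
case=> m [d [o e]].
have E : numq q * d%:Z = 2 ^+ n * m * denq q.
  apply: intr_eq; rewrite !rmorphM /= rmorphXn /= numqE -pmulrn.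
  by rewrite mulrAC e; ring.
have E' : (`|numq q| * d = 2 ^ n * `|m| * `|denq q|)%N.
  by rewrite -[d]/(`|d%:Z|%N) -abszM E !abszM natz abszX.
apply/andP; split.
  rewrite /dvdz absz_nat.
  have : (2 ^ n %| `|numq q| * d)%N by rewrite E' -mulnA dvdn_mulr.
  by rewrite Gauss_dvdl // coprimeXl // coprime2n.
have : (`|denq q| %| `|numq q| * d)%N by rewrite E' dvdn_mull.
rewrite Gauss_dvdr; last by rewrite coprime_sym coprime_num_den.
move=> hd; apply/negP => h2; rewrite /dvdz in h2.
have : (2 %| d)%N by apply: dvdn_trans hd.
by rewrite dvdn2 o.
Qed.



Definition zseq := nat -> rat.
Definition zok (z : zseq) := (forall n, J 0 (z n)) /\ (forall n, J n (z n.+1 - z n)).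
Definition zeq (u v : zseq) := forall n, J n (u n - v n).
Definition zzero (z : zseq) := forall n, J n (z n).

Lemma zok_far z m N : zok z -> (m <= N)%N -> J m (z N - z m).
Proof.
move=> [_ hc]; elim: N => [|N IH]; first by rewrite leqn0 => /eqP ->; rewrite subrr; apply: J0.
rewrite leq_eqVlt => /orP [/eqP <-|]; first by rewrite subrr; apply: J0.
rewrite ltnS => hmN.
have -> : z N.+1 - z m = (z N.+1 - z N) + (z N - z m) by ring.
by apply: J_add (IH hmN); apply: J_mono hmN (hc N).
Qed.

Lemma zok_add x y : zok x -> zok y -> zok (fun n => x n + y n).
Proof.
move=> [h1 h2] [h3 h4]; split => n; first exact: J_add.
have -> : x n.+1 + y n.+1 - (x n + y n) = (x n.+1 - x n) + (y n.+1 - y n) by ring.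
exact: J_add.
Qed.

Lemma zok_opp x : zok x -> zok (fun n => - x n).
Proof.
move=> [h1 h2]; split => n; first exact: J_opp.
have -> : - x n.+1 - - x n = - (x n.+1 - x n) by ring.
exact: J_opp.
Qed.

Lemma zok_mul x y : zok x -> zok y -> zok (fun n => x n * y n).
Proof.
move=> [h1 h2] [h3 h4]; split => n; first by apply: J_mulr.
have -> : x n.+1 * y n.+1 - x n * y n = (x n.+1 - x n) * y n.+1 + x n * (y n.+1 - y n) by ring.
by apply: J_add; [apply: J_mull | apply: J_mulr].
Qed.

Lemma zok_const c : J 0 c -> zok (fun _ => c).
Proof. by move=> h; split => n //; rewrite subrr; apply: J0. Qed.

Lemma zok_nat k : zok (fun _ => k%:R).
Proof. by apply: zok_const; have := J_int k; rewrite -pmulrn. Qed.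

Lemma zok_J0 x n : zok x -> J 0 (x n).
Proof. by case. Qed.

Lemma zval x : zok x -> ~ zzero x ->
  exists k, (forall N, (k <= N)%N -> J k (x N)) /\ ~ J k.+1 (x k.+1).
Proof.
move=> hx hnz.
have ex : exists n, ~~ in2n n (x n).
  apply: NNPP => hn; apply: hnz => n; apply/in2nP.
  by apply: negbNE; apply/negP => h; apply: hn; exists n; rewrite h.
case: (ex_minnP ex) => m hm hmin.
have m0 : (0 < m)%N.
  case: m hm hmin => // /negP h _; exfalso; apply: h; apply/in2nP; exact: zok_J0.
exists m.-1; split.
  have hk : J m.-1 (x m.-1).
    apply/in2nP; apply: negbNE; apply/negP => h.
    by have := hmin _ h; lia.
  move=> N hN; have -> : x N = (x N - x m.-1) + x m.-1 by ring.
  by apply: J_add hk; apply: zok_far.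
rewrite prednK // => h; move/negP: hm; apply; exact/in2nP.
Qed.

Lemma J_unit a : J 0 a -> ~ J 1 a -> J 1 (a - 1).
Proof. by move=> h0 h1; have := J_split h0 h1; rewrite expr0. Qed.

Lemma unit_mul a b : J 0 a -> J 0 b -> ~ J 1 a -> ~ J 1 b -> ~ J 1 (a * b).
Proof.
move=> a0 b0 a1 b1 h.
have ha := J_unit a0 a1; have hb := J_unit b0 b1.
apply: J_not1.
have -> : (1 : rat) = a * b - ((a - 1) * b + (b - 1)) by ring.
by apply: J_sub h (J_add (J_mull b0 ha) hb).
Qed.

Lemma unit_of_val (x : zseq) k N : J k (x N) -> ~ J k.+1 (x N) -> J 0 (x N / 2 ^+ k) /\ ~ J 1 (x N / 2 ^+ k).
Proof.
move=> h1 h2; split; first by apply: J_2div; rewrite addn0.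
move=> h; apply: h2.
have -> : x N = 2 ^+ k * (x N / 2 ^+ k) by field; rewrite expf_neq0.
by have := J_2mul k h; rewrite addn1.
Qed.

Lemma zdomain x y : zok x -> zok y -> ~ zzero x -> ~ zzero y -> ~ zzero (fun n => x n * y n).
Proof.
move=> hx hy nx ny hz.
case: (zval hx nx) => k [xk xk1]; case: (zval hy ny) => l [yl yl1].
pose N := (k + l).+1.
have xN : ~ J k.+1 (x N).
  move=> h; apply: xk1; have -> : x k.+1 = x N - (x N - x k.+1) by ring.
  by apply: (J_sub h); apply: zok_far => //; rewrite /N; lia.
have yN : ~ J l.+1 (y N).
  move=> h; apply: yl1; have -> : y l.+1 = y N - (y N - y l.+1) by ring.
  by apply: (J_sub h); apply: zok_far => //; rewrite /N; lia.
have [a0 a1] := unit_of_val (xk N (leq_trans (leq_addr l k) (leqnSn _))) xN.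
have [b0 b1] := unit_of_val (yl N (leq_trans (leq_addl k l) (leqnSn _))) yN.
apply: (unit_mul a0 b0 a1 b1).
have := hz N; rewrite /N -addn1 => h.
have := J_2div h.
have -> : x (k + l + 1)%N * y (k + l + 1)%N / 2 ^+ (k + l) =
  x (k + l + 1)%N / 2 ^+ k * (y (k + l + 1)%N / 2 ^+ l).
  by rewrite exprD; field; rewrite !expf_neq0.
by rewrite addn1.
Qed.

Lemma zconst_nz c : ~ J 1 c -> ~ zzero (fun _ => c).
Proof. by move=> h hz; apply: h; apply: hz. Qed.

Lemma toint_ex q n : J 0 q -> exists z : int, J n (z%:~R - q).
Proof.
case=> m [d [o e]]; rewrite expr0 mul1r in e.
have d0 : (0 < 2 ^ n)%N by rewrite expn_gt0.
case: (Bezoutl d d0) => a _ ha.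
have g1 : gcdn (2 ^ n) d = 1%N by apply/eqP; apply: coprimeXl; rewrite coprime2n.
rewrite g1 in ha; case/dvdnP: ha => t ht.
exists (- (m * a%:Z)); exists (- (m * t%:Z)), d; split => //.
have hd : (d%:R : rat) != 0 by rewrite pnatr_eq0; case: (d) o.
have -> : q = m%:~R / d%:R by rewrite -e; field.
have ht' : (1 + a%:R * d%:R : rat) = t%:R * 2 ^+ n.
  by have := congr1 (fun k : nat => (k%:R : rat)) ht; rewrite /= natrD !natrM natrX.
rewrite rmorphN rmorphM /= -pmulrn rmorphN rmorphM /= -pmulrn.
transitivity (- (m%:~R * (1 + a%:R * d%:R)) : rat); first by field.
rewrite ht'; ring.
Qed.

Definition toint (q : rat) (n : nat) (h : J 0 q) : int :=
  proj1_sig (constructive_indefinite_description _ (toint_ex n h)).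

Lemma tointP q n h : J n ((@toint q n h)%:~R - q).
Proof. by rewrite /toint; case: constructive_indefinite_description. Qed.

Lemma J_intdvd n (z : int) : J n z%:~R -> ((2 ^ n)%N%:Z %| z)%Z.
Proof. by move/in2nP => /andP [h _]; rewrite numq_int in h. Qed.

Lemma intdvd_J (z : int) : (2 %| z)%Z -> J 1 z%:~R.
Proof.
move=> h; apply/in2nP; apply/andP; split; first by rewrite numq_int.
by rewrite denq_int.
Qed.

Definition zint (p : zseq) (hp : forall n, J 0 (p n)) : z2 := fun n => toint n (hp n).

Lemma zint_compat p (hp : zok p) : z2_compat (zint (proj1 hp)).
Proof.
move=> n; rewrite eqz_mod_dvd; apply: J_intdvd.
rewrite /zint rmorphB /=.
set a := toint _ _; set b := toint _ _.
have ha : J n.+1 (a%:~R - p n.+1) by apply: tointP.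
have hb : J n (b%:~R - p n) by apply: tointP.
have -> : (a%:~R - b%:~R : rat) = (a%:~R - p n.+1) + (p n.+1 - p n) - (b%:~R - p n) by ring.
apply: J_sub; last exact: hb.
apply: J_add; last exact: (proj2 hp n).
exact: J_mono ha.
Qed.

Lemma zint_close p (hp : zok p) n : J n ((zint (proj1 hp) n)%:~R - p n).
Proof. exact: tointP. Qed.

Lemma zint_unit p (hp : zok p) : ~ J 1 (p 1%N) -> z2_unit (zint (proj1 hp)).
Proof.
move=> h; apply/negP => h2; apply: h.
have := intdvd_J h2 => h3.
have -> : p 1%N = (zint (proj1 hp) 1%N)%:~R - ((zint (proj1 hp) 1%N)%:~R - p 1%N) by ring.
by apply: (J_sub h3); apply: zint_close.
Qed.

Definition zquad (u v p q r : zseq) : Prop :=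
  zeq (fun n => r n ^+ 2) (fun n => u n * p n ^+ 2 + v n * q n ^+ 2).

Definition ztriv (u v : zseq) : Prop :=
  exists p q r : zseq, [/\ zok p, zok q, zok r, zquad u v p q r &
    ~ (zzero p /\ zzero q /\ zzero r)].

Lemma sq_close (R r : rat) n : J 0 R -> J 0 r -> J n (R - r) -> J n (R ^+ 2 - r ^+ 2).
Proof.
move=> h1 h2 h3; have -> : R ^+ 2 - r ^+ 2 = (R - r) * (R + r) by ring.
by apply: J_mull => //; apply: J_add.
Qed.

Lemma prim_inv2 u v p q r : zok u -> zok v -> zok p -> zok q -> zok r ->
  zquad u v p q r -> (~ J 1 (p 1%N) \/ ~ J 1 (q 1%N) \/ ~ J 1 (r 1%N)) ->
  inv2_quat_zero u v.
Proof.
move=> hu hv hp hq hr he hun.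
exists (zint (proj1 hp)), (zint (proj1 hq)), (zint (proj1 hr)); split.
- exact: zint_compat.
- exact: zint_compat.
- exact: zint_compat.
- by case: hun => [h|[h|h]]; [left|right;left|right;right]; apply: zint_unit.
move=> n; apply/in2nP.
set P := zint (proj1 hp) n; set Q := zint (proj1 hq) n; set R := zint (proj1 hr) n.
have cP : J n (P%:~R - p n) by exact: (zint_close hp n).
have cQ : J n (Q%:~R - q n) by exact: (zint_close hq n).
have cR : J n (R%:~R - r n) by exact: (zint_close hr n).
have sP := sq_close (J_int P) (zok_J0 n hp) cP.
have sQ := sq_close (J_int Q) (zok_J0 n hq) cQ.
have sR := sq_close (J_int R) (zok_J0 n hr) cR.
have -> : (R%:~R ^+ 2 - u n * P%:~R ^+ 2 - v n * Q%:~R ^+ 2 : rat) =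
  (r n ^+ 2 - (u n * p n ^+ 2 + v n * q n ^+ 2)) + (R%:~R ^+ 2 - r n ^+ 2)
  - u n * (P%:~R ^+ 2 - p n ^+ 2) - v n * (Q%:~R ^+ 2 - q n ^+ 2) by ring.
apply: J_sub; last by apply: J_mulr => //; exact: zok_J0.
apply: J_sub; last by apply: J_mulr => //; exact: zok_J0.
by apply: J_add; first exact: he.
Qed.

Lemma zshift (x : zseq) k : zok x -> (forall N, (k <= N)%N -> J k (x N)) ->
  zok (fun n => x (n + k + k)%N / 2 ^+ k).
Proof.
move=> hx hk; split => n.
  by apply: J_2div; rewrite addn0; apply: hk; rewrite leq_addl.
have -> : x (n.+1 + k + k)%N / 2 ^+ k - x (n + k + k)%N / 2 ^+ k =
   (x (n.+1 + k + k)%N - x (n + k + k)%N) / 2 ^+ k by field; rewrite expf_neq0.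
have -> : (n.+1 + k + k)%N = (n + k + k).+1 by lia.
apply: J_2div; apply: (J_mono _ (proj2 hx (n + k + k)%N)); lia.
Qed.

Lemma ztriv_inv2 u v : zok u -> zok v -> ztriv u v -> inv2_quat_zero u v.
Proof.
move=> hu hv [p [q [r [hp hq hr he hnz]]]].
have ex : exists n, ~~ [&& in2n n (p n), in2n n (q n) & in2n n (r n)].
  apply: NNPP => hn; apply: hnz.
  have H : forall n, [&& in2n n (p n), in2n n (q n) & in2n n (r n)].
    by move=> n; apply: negbNE; apply/negP => h; apply: hn; exists n.
  by split; [|split] => n; have /and3P [h1 h2 h3] := H n; apply/in2nP.
case: (ex_minnP ex) => m hm hmin.
have m0 : (0 < m)%N.
  case: m hm hmin => // /negP h _; exfalso; apply: h.
  by apply/and3P; split; apply/in2nP; apply: zok_J0.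
set k := m.-1.
have hk : [&& in2n k (p k), in2n k (q k) & in2n k (r k)].
  apply: negbNE; apply/negP => h; have := hmin _ h; rewrite /k; lia.
case/and3P: hk => /in2nP pk /in2nP qk /in2nP rk.
have far : forall (x : zseq), zok x -> J k (x k) -> forall N, (k <= N)%N -> J k (x N).
  move=> x hx hxk N hN; have -> : x N = (x N - x k) + x k by ring.
  by apply: J_add hxk; apply: zok_far.
have fp := far p hp pk; have fq := far q hq qk; have fr := far r hr rk.
pose sh (x : zseq) := fun n => x (n + k + k)%N / 2 ^+ k.
apply: (@prim_inv2 u v (sh p) (sh q) (sh r)) => //.
- exact: zshift.
- exact: zshift.
- exact: zshift.
- move=> n; rewrite /sh.
  set N := (n + k + k)%N.
  have h2 : (2 ^+ k : rat) != 0 by rewrite expf_neq0.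
  have -> : (r N / 2 ^+ k) ^+ 2 - (u n * (p N / 2 ^+ k) ^+ 2 + v n * (q N / 2 ^+ k) ^+ 2)
     = ((r N ^+ 2 - (u N * p N ^+ 2 + v N * q N ^+ 2)) + (u N - u n) * p N ^+ 2
        + (v N - v n) * q N ^+ 2) / 2 ^+ (k + k) by rewrite exprD; field.
  apply: J_2div; rewrite addnC.
  have kN : (k <= N)%N by rewrite /N; lia.
  have hpp : J (k + k) (p N ^+ 2) by rewrite expr2; apply: J_mul; apply: fp.
  have hqq : J (k + k) (q N ^+ 2) by rewrite expr2; apply: J_mul; apply: fq.
  apply: J_add; first apply: J_add.
  + by rewrite /N addnA; apply: he.
  + by apply: J_mul hpp; apply: zok_far => //; rewrite /N; lia.
  + by apply: J_mul hqq; apply: zok_far => //; rewrite /N; lia.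
- have hm' : ~~ [&& in2n k.+1 (p k.+1), in2n k.+1 (q k.+1) & in2n k.+1 (r k.+1)].
    by rewrite /k prednK.
  have gen : forall (x : zseq), zok x -> (forall N, (k <= N)%N -> J k (x N)) ->
      ~~ in2n k.+1 (x k.+1) -> ~ J 1 (sh x 1%N).
    move=> x hx fx /negP hn h; apply: hn; apply/in2nP.
    have -> : x k.+1 = x (1 + k + k)%N - (x (1 + k + k)%N - x k.+1) by ring.
    apply: J_sub; last by apply: zok_far => //; lia.
    have -> : x (1 + k + k)%N = 2 ^+ k * sh x 1%N by rewrite /sh; field; rewrite expf_neq0.
    by have := J_2mul k h; rewrite addn1.
  case/nandP: hm' => [h|/nandP [h|h]].
  + by left; apply: gen.
  + by right; left; apply: gen.
  + by right; right; apply: gen.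
Qed.




Fixpoint Tsq (u : zseq) (k : nat) : int :=
  match k with
  | 0 => 1
  | k'.+1 => let S := Tsq u k' in
      if (k' < 2)%N || in2n k'.+2 ((S%:~R : rat) ^+ 2 - u k'.+2) then S else S + 2 ^+ k'
  end.

Lemma Tsq_inv (u : zseq) : zok u -> J 3 (u 3%N - 1) -> forall k,
  [/\ J 1 ((Tsq u k)%:~R - 1), J k.+1 ((Tsq u k)%:~R ^+ 2 - u k.+1) & ((k <= 2)%N -> Tsq u k = 1)].
Proof.
move=> hu h3.
have low : forall j, (j <= 3)%N -> J j (1 - u j).
  move=> j hj; have -> : 1 - u j = - (u 3%N - 1) + (u 3%N - u j) by ring.
  by apply: J_add; [apply: J_opp; apply: J_mono h3 | apply: zok_far].
elim=> [|k [IH1 IH2 IH3]].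
  by split => //=; rewrite ?subrr ?expr1n; [apply: J0 | apply: low].
rewrite /=; case: ifP => [/orP [hk|hin]|].
- have -> : Tsq u k = 1 by apply: IH3; lia.
  split => //; first by rewrite subrr; apply: J0.
  by rewrite expr1n; apply: low; lia.
- split => //; first by apply/in2nP.
  by move=> hk; apply: IH3; lia.
move/negbT; rewrite negb_or => /andP [hk /negP hin].
have hin' : ~ J k.+2 ((Tsq u k)%:~R ^+ 2 - u k.+2) by move=> h; apply: hin; apply/in2nP.
have hX : J k.+1 ((Tsq u k)%:~R ^+ 2 - u k.+2).
  have -> : (Tsq u k)%:~R ^+ 2 - u k.+2 = ((Tsq u k)%:~R ^+ 2 - u k.+1) - (u k.+2 - u k.+1) by ring.
  by apply: J_sub IH2 _; apply: (proj2 hu).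
have hs := J_split hX hin'.
have k2 : (2 <= k)%N by lia.
rewrite rmorphD rmorphXn /=.
split; last by lia.
- have -> : (Tsq u k)%:~R + 2 ^+ k - 1 = ((Tsq u k)%:~R - 1) + 2 ^+ k :> rat by ring.
  by apply: J_add IH1 _; apply: (J_mono _ (J_pow k)); lia.
- have -> : ((Tsq u k)%:~R + 2 ^+ k) ^+ 2 - u k.+2 =
    (((Tsq u k)%:~R ^+ 2 - u k.+2) - 2 ^+ k.+1) + 2 ^+ k.+1 * (((Tsq u k)%:~R - 1) + 2)
    + 2 ^+ k * 2 ^+ k :> rat by rewrite !exprS; ring.
  apply: J_add; first apply: J_add.
  + exact: hs.
  + have := J_2mul k.+1 (J_add IH1 (J_pow 1)); rewrite expr1 addn1 //.
  + by have := J_mul (J_pow k) (J_pow k); apply: J_mono; lia.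
Qed.

Lemma zsqrt (u : zseq) : zok u -> J 3 (u 3%N - 1) ->
  exists s : zseq, zok s /\ zeq (fun n => s n ^+ 2) u.
Proof.
move=> hu h3; have I := Tsq_inv hu h3.
exists (fun n => (Tsq u n)%:~R); split.
  split => n; first exact: J_int.
  rewrite /=; case: ifP => _; first by rewrite subrr; apply: J0.
  by rewrite rmorphD rmorphXn /= addrAC subrr add0r; apply: J_pow.
move=> n; have [_ h _] := I n.
have -> : (Tsq u n)%:~R ^+ 2 - u n = ((Tsq u n)%:~R ^+ 2 - u n.+1) + (u n.+1 - u n) by ring.
by apply: J_add; [apply: J_mono h | apply: (proj2 hu)].
Qed.


Lemma zok_sq (x : zseq) : zok x -> zok (fun n => x n ^+ 2).
Proof.
move=> h; have -> : (fun n => x n ^+ 2) = (fun n => x n * x n).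
  by apply: functional_extensionality => n; rewrite expr2.
exact: zok_mul.
Qed.

Lemma zz_cancel (x y : zseq) : zok x -> zok y -> ~ zzero x ->
  zzero (fun n => x n * y n) -> zzero y.
Proof. by move=> hx hy nx hz; apply: NNPP => ny; apply: (zdomain hx hy nx ny). Qed.

Lemma one_nz : ~ zzero (fun _ => 1).
Proof. by apply: zconst_nz; exact: J_not1. Qed.

Lemma nat_nz k : odd k -> ~ zzero (fun _ => k%:R).
Proof.
move=> ok; apply: zconst_nz => h.
have e : k = (k./2.*2).+1 by rewrite -{1}(odd_double_half k) ok.
have e' : (k%:R : rat) = (k./2)%:R * 2 + 1.
  by rewrite [in LHS]e -addn1 natrD -muln2 natrM.
rewrite e' in h.
apply: J_not1.
have -> : (1 : rat) = ((k./2)%:R * 2 + 1) - (k./2)%:R * 2 by ring.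
apply: J_sub h _.
by have := J_mulr (zok_J0 0 (zok_nat (k./2))) (J_pow 1); rewrite expr1.
Qed.

Lemma pow2_nz k : ~ zzero (fun _ => (2 : rat) ^+ k).
Proof.
move=> h; apply: J_not1; have := h k.+1; rewrite -addn1 => /J_2div.
by rewrite divff // expf_neq0.
Qed.

Lemma two_nz : ~ zzero (fun _ => (2 : rat)).
Proof. by have := pow2_nz (k:=1); rewrite expr1. Qed.

Lemma four_nz : ~ zzero (fun _ => (4 : rat)).
Proof. by have := pow2_nz (k:=2); rewrite expr2. Qed.

Lemma direct u v : zok u -> zok v -> J 2 (u 2%N - 1) -> ~ J 1 (v 1%N) -> ztriv u v.
Proof.
move=> hu hv h2 hv1.
have v1 := J_unit (zok_J0 1 hv) hv1.
have u3 : J 2 (u 3%N - 1).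
  have -> : u 3%N - 1 = (u 3%N - u 2%N) + (u 2%N - 1) by ring.
  by apply: J_add h2; apply: (proj2 hu).
case: (classic (J 3 (u 3%N - 1))) => h3.
  case: (zsqrt hu h3) => s [hs es].
  exists (fun _ => 1), (fun _ => 0), s; split => //.
  - by apply: zok_const; apply: (zok_J0 0 (zok_nat 1)).
  - by apply: zok_const; apply: J0.
  - by move=> n; have -> : s n ^+ 2 - (u n * 1 ^+ 2 + v n * 0 ^+ 2) = s n ^+ 2 - u n by ring.
  - by case=> h _; apply: one_nz.
have hs := J_split u3 h3.
pose w := fun n => u n + v n * 4.
have hw : zok w.
  by apply: zok_add hu _; apply: zok_mul hv _; apply: zok_nat.
have w3 : J 3 (w 3%N - 1).
  have v3 : J 1 (v 3%N - 1).
    have -> : v 3%N - 1 = (v 3%N - v 1%N) + (v 1%N - 1) by ring.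
    by apply: J_add v1; apply: zok_far.
  have -> : w 3%N - 1 = ((u 3%N - 1 - 2 ^+ 2) + 2 ^+ 2 * (v 3%N - 1)) + 2 ^+ 3.
    by rewrite /w /= !exprS expr0; ring.
  apply: J_add; last exact: J_pow.
  by apply: J_add hs _; apply: J_2mul.
case: (zsqrt hw w3) => s [hs' es].
exists (fun _ => 1), (fun _ => 2), s; split => //.
- by apply: zok_const; apply: (zok_J0 0 (zok_nat 1)).
- by apply: zok_nat.
- by move=> n; have -> : s n ^+ 2 - (u n * 1 ^+ 2 + v n * 2 ^+ 2) = s n ^+ 2 - w n by rewrite /w /=; ring.
- by case=> h _; apply: one_nz.
Qed.

Lemma T1 (D al be ga : zseq) : zok D -> zok al -> zok be -> zok ga ->
  (forall n, D n = be n ^+ 2 - 4 * al n * ga n) -> ~ zzero al -> ~ zzero ga ->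
  ztriv D al -> ztriv D ga.
Proof.
move=> hD hal hbe hga eD nal nga [p [q [r [hp hq hr he hnz]]]].
have h4 : zok (fun n => 4 * al n * ga n) by apply: zok_mul hga; apply: zok_mul hal; apply: zok_nat.
have h2a : zok (fun n => 2 * al n) by apply: zok_mul hal; apply: zok_nat.
exists (fun n => be n * p n + r n), (fun n => 2 * al n * q n),
       (fun n => be n * r n + D n * p n); split.
- by apply: zok_add hr; apply: zok_mul.
- by apply: zok_mul hq.
- by apply: zok_add; apply: zok_mul.
- move=> n.
  have -> : (be n * r n + D n * p n) ^+ 2 - (D n * (be n * p n + r n) ^+ 2 + ga n * (2 * al n * q n) ^+ 2)
     = 4 * al n * ga n * (r n ^+ 2 - (D n * p n ^+ 2 + al n * q n ^+ 2)) by rewrite !eD; ring.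
  apply: J_mulr; last exact: he.
  exact: (zok_J0 n h4).
- move=> [zp [zq zr]]; apply: hnz.
  have n4 : ~ zzero (fun n => 4 * al n * ga n).
    have h4a : zok (fun n => 4 * al n) by apply: zok_mul hal; apply: zok_nat.
    apply: (zdomain (x := fun n => 4 * al n) (y := ga)) => //.
    by apply: (zdomain (x := fun _ => 4) (y := al)) => //; [apply: zok_nat | apply: four_nz].
  have Q0 : zzero q.
    apply: (zz_cancel h2a hq) => //.
    by apply: (zdomain (x := fun _ => 2) (y := al)) => //; [apply: zok_nat | apply: two_nz].
  have P0 : zzero p.
    apply: (zz_cancel h4 hp n4) => n.
    have -> : 4 * al n * ga n * p n = be n * (be n * p n + r n) - (be n * r n + D n * p n) by rewrite eD; ring.
    by apply: J_sub (zr n); apply: J_mulr (zp n); apply: (zok_J0 n hbe).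
  split => //; split => // n.
  have -> : r n = (be n * p n + r n) - be n * p n by ring.
  by apply: J_sub (zp n) _; apply: J_mulr (P0 n); apply: (zok_J0 n hbe).
Qed.

Lemma T2 (X Y g d w : zseq) : zok X -> zok Y -> zok g -> zok d -> zok w ->
  (forall n, J n (X n * Y n - g n ^+ 2 + 4 * d n * w n ^+ 2)) -> ~ zzero X -> ~ zzero Y ->
  ztriv X d -> ztriv Y d.
Proof.
move=> hX hY hg hd hw eH nX nY [p [q [r [hp hq hr he hnz]]]].
have h2w : zok (fun n => 2 * w n) by apply: zok_mul hw; apply: zok_nat.
have h2dw : zok (fun n => 2 * d n * w n) by apply: zok_mul hw; apply: zok_mul hd; apply: zok_nat.
have hXY : zok (fun n => X n * Y n) by apply: zok_mul.
have hN : zok (fun n => r n ^+ 2 - d n * q n ^+ 2).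
  apply: zok_add; first by apply: zok_sq.
  by apply: zok_opp; apply: (zok_mul (y := fun n => q n ^+ 2) hd); apply: zok_sq.
have hH : zok (fun n => X n * Y n - g n ^+ 2 + 4 * d n * w n ^+ 2).
  apply: zok_add; first apply: zok_add => //.
    by apply: zok_opp; apply: zok_sq.
  apply: zok_mul; first by apply: zok_mul hd; apply: zok_nat.
  exact: zok_sq.
exists (fun n => X n * p n), (fun n => g n * q n + 2 * w n * r n),
       (fun n => g n * r n + 2 * d n * w n * q n); split.
- exact: zok_mul.
- by apply: zok_add; apply: zok_mul.
- by apply: zok_add; apply: zok_mul.
- move=> n.
  have -> : (g n * r n + 2 * d n * w n * q n) ^+ 2 - (Y n * (X n * p n) ^+ 2 + d n * (g n * q n + 2 * w n * r n) ^+ 2)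
     = X n * Y n * (r n ^+ 2 - (X n * p n ^+ 2 + d n * q n ^+ 2))
       - (X n * Y n - g n ^+ 2 + 4 * d n * w n ^+ 2) * (r n ^+ 2 - d n * q n ^+ 2) by ring.
  apply: J_sub.
    by apply: J_mulr; [exact: (zok_J0 n hXY) | exact: he].
  by apply: J_mull (eH n); exact: (zok_J0 n hN).
- move=> [zp [zq zr]]; apply: hnz.
  have nXY : ~ zzero (fun n => X n * Y n) by apply: zdomain.
  have P0 : zzero p by apply: (zz_cancel hX hp nX).
  have R0 : zzero r.
    apply: (zz_cancel hXY hr nXY) => n.
    have -> : X n * Y n * r n = g n * (g n * r n + 2 * d n * w n * q n)
       - 2 * d n * w n * (g n * q n + 2 * w n * r n)
       + (X n * Y n - g n ^+ 2 + 4 * d n * w n ^+ 2) * r n by ring.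
    apply: J_add; last by apply: J_mull (eH n); exact: (zok_J0 n hr).
    apply: J_sub; first by apply: J_mulr (zr n); exact: (zok_J0 n hg).
    by apply: J_mulr (zq n); exact: (zok_J0 n h2dw).
  have Q0 : zzero q.
    apply: (zz_cancel hXY hq nXY) => n.
    have -> : X n * Y n * q n = g n * (g n * q n + 2 * w n * r n)
       - 2 * w n * (g n * r n + 2 * d n * w n * q n)
       + (X n * Y n - g n ^+ 2 + 4 * d n * w n ^+ 2) * q n by ring.
    apply: J_add; last by apply: J_mull (eH n); exact: (zok_J0 n hq).
    apply: J_sub; first by apply: J_mulr (zq n); exact: (zok_J0 n hg).
    by apply: J_mulr (zr n); exact: (zok_J0 n h2w).
  by [].
Qed.

Ltac zauto := repeat first [ assumption | apply: zok_nat | apply: zok_sq | apply: zok_add | apply: zok_opp | apply: zok_mul ].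

Lemma nz_of_unit (a : zseq) : ~ J 1 (a 1%N) -> ~ zzero a.
Proof. by move=> h hz; apply: h; apply: hz. Qed.

Lemma key (a b c d e f w : zseq) :
  zok a -> zok b -> zok c -> zok d -> zok e -> zok f -> zok w ->
  ~ J 1 (a 1%N) -> ~ J 1 (b 1%N) ->
  (forall n, J n (w n ^+ 2 - (a n * e n ^+ 2 + b n ^+ 2 * f n - b n * c n * e n
                 + c n ^+ 2 * d n - 4 * a n * d n * f n))) ->
  [/\ ztriv (fun n => b n ^+ 2 - 4 * a n * d n) a,
      (~ zzero (fun n => e n ^+ 2 - 4 * d n * f n) -> ~ zzero d ->
         ztriv (fun n => e n ^+ 2 - 4 * d n * f n) d) &
      (~ zzero (fun n => c n ^+ 2 - 4 * a n * f n) -> ~ zzero f ->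
         ztriv (fun n => c n ^+ 2 - 4 * a n * f n) f)].
Proof.
move=> ha hb hc hd he hf hw a1 b1 hW.
have hD1 : zok (fun n => b n ^+ 2 - 4 * a n * d n) by zauto.
have hD2 : zok (fun n => e n ^+ 2 - 4 * d n * f n) by zauto.
have hD3 : zok (fun n => c n ^+ 2 - 4 * a n * f n) by zauto.
have bo : J 1 (b 2%N - 1).
  have -> : b 2%N - 1 = (b 2%N - b 1%N) + (b 1%N - 1) by ring.
  by apply: J_add; [apply: (proj2 hb) | apply: J_unit => //; apply: zok_J0].
have D12 : J 2 ((b 2%N ^+ 2 - 4 * a 2%N * d 2%N) - 1).
  have -> : (b 2%N ^+ 2 - 4 * a 2%N * d 2%N) - 1 =
     (b 2%N - 1) * ((b 2%N - 1) + 2) - 2 ^+ 2 * (a 2%N * d 2%N) by rewrite expr2; ring.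
  apply: J_sub; last by apply: J_2mul; apply: J_mulr; apply: zok_J0.
  have := J_mul bo (J_add bo (J_pow 1)); rewrite expr1 //.
have S1 := direct hD1 ha D12 a1.
have nD1 : ~ zzero (fun n => b n ^+ 2 - 4 * a n * d n).
  move=> hz; apply: J_not1; have := hz 2%N => h.
  have -> : (1 : rat) = (b 2%N ^+ 2 - 4 * a 2%N * d 2%N) - ((b 2%N ^+ 2 - 4 * a 2%N * d 2%N) - 1) by ring.
  by apply: J_sub; apply: (J_mono _ (n := 1%N) (k := 2%N)).
have na := nz_of_unit a1.
split => //.
- move=> nD2 nd.
  have S1' := T1 hD1 ha hb hd (fun n => erefl) na nd S1.
  have hg : zok (fun n => b n * e n - 2 * c n * d n) by zauto.
  apply: (T2 (g := fun n => b n * e n - 2 * c n * d n) (w := w) hD1 hD2 hg hd hw _ nD1 nD2 S1').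
  move=> n.
  have -> : (b n ^+ 2 - 4 * a n * d n) * (e n ^+ 2 - 4 * d n * f n) - (b n * e n - 2 * c n * d n) ^+ 2
      + 4 * d n * w n ^+ 2 = 4 * d n * (w n ^+ 2 - (a n * e n ^+ 2 + b n ^+ 2 * f n - b n * c n * e n
                 + c n ^+ 2 * d n - 4 * a n * d n * f n)) by ring.
  apply: J_mulr; last exact: (hW n).
  have h4d : zok (fun n => 4 * d n) by zauto.
  exact: (zok_J0 n h4d).
- move=> nD3 nf.
  have hg : zok (fun n => b n * c n - 2 * a n * e n) by zauto.
  have S3 : ztriv (fun n => c n ^+ 2 - 4 * a n * f n) a.
    apply: (T2 (g := fun n => b n * c n - 2 * a n * e n) (w := w) hD1 hD3 hg ha hw _ nD1 nD3 S1).
    move=> n.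
    have -> : (b n ^+ 2 - 4 * a n * d n) * (c n ^+ 2 - 4 * a n * f n) - (b n * c n - 2 * a n * e n) ^+ 2
        + 4 * a n * w n ^+ 2 = 4 * a n * (w n ^+ 2 - (a n * e n ^+ 2 + b n ^+ 2 * f n - b n * c n * e n
                   + c n ^+ 2 * d n - 4 * a n * d n * f n)) by ring.
    apply: J_mulr; last exact: (hW n).
    have h4a : zok (fun n => 4 * a n) by zauto.
    exact: (zok_J0 n h4a).
  exact: (T1 hD3 ha hc hf (fun n => erefl) na nf S3).
Qed.



Lemma det3 (R : comRingType) (A : 'M[R]_3) : \det A =
  A (inord 0) (inord 0) * (A (inord 1) (inord 1) * A (inord 2) (inord 2) - A (inord 1) (inord 2) * A (inord 2) (inord 1))
  - A (inord 0) (inord 1) * (A (inord 1) (inord 0) * A (inord 2) (inord 2) - A (inord 1) (inord 2) * A (inord 2) (inord 0))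
  + A (inord 0) (inord 2) * (A (inord 1) (inord 0) * A (inord 2) (inord 1) - A (inord 1) (inord 1) * A (inord 2) (inord 0)).
Proof.
pose B (k l : nat) := A (inord k) (inord l).
have E : forall i j, A i j = B (val i) (val j) by move=> i j; rewrite /B !inord_val.
rewrite (expand_det_row _ ord0) !big_ord_recl big_ord0 /cofactor.
rewrite !(expand_det_row _ ord0) !big_ord_recl !big_ord0 /cofactor !det_mx11.
rewrite !mxE !E /= !inordK // /bump /= !addn0 !add0n !add1n !expr0 !expr1 expr2 mulrNN mulr1.
ring.
Qed.

Definition qv (c : 'I_6 -> rat) (X0 X1 X2 : rat) : rat :=
  c (inord 0) * X0 * X0 + c (inord 1) * X0 * X1 + c (inord 2) * X0 * X2
  + c (inord 3) * X1 * X1 + c (inord 4) * X1 * X2 + c (inord 5) * X2 * X2.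

Lemma ev_q3 c (v : 'I_3 -> rat) : (q3 c).@[v] = qv c (v (inord 0)) (v (inord 1)) (v (inord 2)).
Proof. by rewrite /q3 /quadform !mevalD !mevalM !mevalC !mevalXU. Qed.

Definition Wf (a b c d e f : rat) : rat :=
  a * e ^+ 2 + b ^+ 2 * f - b * c * e + c ^+ 2 * d - 4 * a * d * f.

Lemma ev_disc A B C D E F (v : 'I_3 -> rat) :
  (disc_sextic A B C D E F).@[v] =
  - 2 * Wf (q3 A).@[v] (q3 B).@[v] (q3 C).@[v] (q3 D).@[v] (q3 E).@[v] (q3 F).@[v].
Proof.
have vi : forall k, (k < 3)%N -> \val (inord k : 'I_3) = k by move=> k hk; exact: inordK.
rewrite /disc_sextic -det_map_mx det3 !mxE !vi //= !mevalM !rmorph_nat /Wf.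
ring.
Qed.

Lemma vz_J0 q : v2_zero q -> J 0 q.
Proof. case=> _ [_ h]; apply/in2nP; rewrite /in2n h expn0 andbT; exact: dvd1n. Qed.

Lemma vz_n1 q : v2_zero q -> ~ J 1 q.
Proof. by case=> _ [h _] /in2nP /andP [h' _]; move: h'; rewrite expn1 (negbTE h). Qed.

Lemma vp_J1 q : v2_pos q -> J 1 q.
Proof. by case=> h1 h2; apply/in2nP; rewrite /in2n expn1 h1 h2. Qed.

Lemma vp_J0 q : v2_pos q -> J 0 q.
Proof. by move/vp_J1; apply: J_mono. Qed.

Lemma zok_x (a : z2) : z2_compat a -> zok (fun n => (a n)%:~R).
Proof.
move=> h; split => n; first exact: J_int.
rewrite -rmorphB; apply/in2nP; rewrite /in2n numq_int denq_int -eqz_mod_dvd h /=.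
by rewrite /dvdz.
Qed.

Lemma unit_x (a : z2) : z2_unit a -> ~ J 1 ((a 1%N)%:~R).
Proof. by move=> h /in2nP /andP [h' _]; move: h'; rewrite numq_int expn1 (negbTE h). Qed.

Lemma cJ1 (c : 'I_6 -> rat) k j : (forall i : 'I_6, val i <> k -> J 1 (c i)) ->
  (j < 6)%N -> j <> k -> J 1 (c (inord j)).
Proof. by move=> h hj hjk; apply: h; rewrite /= inordK. Qed.

Lemma zok_qv (c : 'I_6 -> rat) (X0 X1 X2 : zseq) : (forall i, J 0 (c i)) ->
  zok X0 -> zok X1 -> zok X2 -> zok (fun n => qv c (X0 n) (X1 n) (X2 n)).
Proof.
move=> hc h0 h1 h2; rewrite /qv.
have k0 := zok_const (hc (inord 0)); have k1 := zok_const (hc (inord 1)).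
have k2 := zok_const (hc (inord 2)); have k3 := zok_const (hc (inord 3)).
have k4 := zok_const (hc (inord 4)); have k5 := zok_const (hc (inord 5)).
zauto.
Qed.

Lemma qv_unit (c : 'I_6 -> rat) (X0 X1 X2 : rat) k (Xk : rat) :
  (forall i, J 0 (c i)) -> (forall i : 'I_6, val i <> k -> J 1 (c i)) ->
  J 0 X0 -> J 0 X1 -> J 0 X2 -> ~ J 1 (c (inord k)) -> ~ J 1 Xk ->
  qv c X0 X1 X2 - c (inord k) * (Xk * Xk) =
    \sum_(j < 6 | j != k :> nat) c (inord j) * [:: X0 * X0; X0 * X1; X0 * X2; X1 * X1; X1 * X2; X2 * X2]`_j ->
  (k < 6)%N -> J 0 Xk ->
  ~ J 1 (qv c X0 X1 X2).
Proof.
move=> hc h1 j0 j1 j2 ck xk E k6 xk0 hq.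
have hs : J 1 (\sum_(j < 6 | j != k :> nat) c (inord j) * [:: X0 * X0; X0 * X1; X0 * X2; X1 * X1; X1 * X2; X2 * X2]`_j).
  apply: (big_ind (fun x => J 1 x)); [exact: J0 | exact: J_add |].
  move=> j hj; apply: J_mull; last by apply: cJ1 h1 _ _ => //; apply/eqP.
  case: j hj => [[|[|[|[|[|[|//]]]]]]] /= _ _; apply: (J_mul (n := 0%N) (k := 0%N)) => //.
apply: (unit_mul (hc (inord k)) (J_mul xk0 xk0) ck (unit_mul xk0 xk0 xk xk)).

by have := J_sub hq hs; rewrite -E; congr J; ring.
Qed.

Lemma qv_unit0 c X0 X1 X2 : (forall i, J 0 (c i)) -> (forall i : 'I_6, val i <> 0%N -> J 1 (c i)) ->
  J 0 X0 -> J 0 X1 -> J 0 X2 -> ~ J 1 (c (inord 0)) -> ~ J 1 X0 -> ~ J 1 (qv c X0 X1 X2).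
Proof.
move=> ? ? ? ? ? ? ?; apply: (qv_unit (k:=0) (Xk:=X0)) => //.
rewrite big_mkcond !big_ord_recl big_ord0 /= /bump /= !addn0 !add1n /qv; ring.
Qed.

Lemma qv_unit3 c X0 X1 X2 : (forall i, J 0 (c i)) -> (forall i : 'I_6, val i <> 3%N -> J 1 (c i)) ->
  J 0 X0 -> J 0 X1 -> J 0 X2 -> ~ J 1 (c (inord 3)) -> ~ J 1 X1 -> ~ J 1 (qv c X0 X1 X2).
Proof.
move=> ? ? ? ? ? ? ?; apply: (qv_unit (k:=3) (Xk:=X1)) => //.
rewrite big_mkcond !big_ord_recl big_ord0 /= /bump /= !addn0 !add1n /qv; ring.
Qed.

Lemma qv_unit5 c X0 X1 X2 : (forall i, J 0 (c i)) -> (forall i : 'I_6, val i <> 5%N -> J 1 (c i)) ->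
  J 0 X0 -> J 0 X1 -> J 0 X2 -> ~ J 1 (c (inord 5)) -> ~ J 1 X2 -> ~ J 1 (qv c X0 X1 X2).
Proof.
move=> ? ? ? ? ? ? ?; apply: (qv_unit (k:=5) (Xk:=X2)) => //.
rewrite big_mkcond !big_ord_recl big_ord0 /= /bump /= !addn0 !add1n /qv; ring.
Qed.

Lemma ztriv_ext (u u' v : zseq) : (forall n, u n = u' n) -> ztriv u v -> ztriv u' v.
Proof. by move=> h; have -> : u = u' by apply: functional_extensionality. Qed.

Lemma nzz_ext (u u' : zseq) : (forall n, u n = u' n) -> ~ zzero u -> ~ zzero u'.
Proof. by move=> h; have -> : u = u' by apply: functional_extensionality. Qed.

Lemma all3 (a b c d e f w : zseq) :
  zok a -> zok b -> zok c -> zok d -> zok e -> zok f -> zok w ->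
  (forall n, J n (w n ^+ 2 - Wf (a n) (b n) (c n) (d n) (e n) (f n))) ->
  (~ J 1 (a 1%N) /\ ~ J 1 (b 1%N)) \/ (~ J 1 (d 1%N) /\ ~ J 1 (e 1%N)) \/
  (~ J 1 (f 1%N) /\ ~ J 1 (c 1%N)) ->
  [/\ ~ zzero (fun n => b n ^+ 2 - 4 * a n * d n) -> ~ zzero a ->
        ztriv (fun n => b n ^+ 2 - 4 * a n * d n) a,
      ~ zzero (fun n => e n ^+ 2 - 4 * d n * f n) -> ~ zzero d ->
        ztriv (fun n => e n ^+ 2 - 4 * d n * f n) d &
      ~ zzero (fun n => c n ^+ 2 - 4 * a n * f n) -> ~ zzero f ->
        ztriv (fun n => c n ^+ 2 - 4 * a n * f n) f].
Proof.
move=> ha hb hc hd he hf hw hW [[u1 u2]|[[u1 u2]|[u1 u2]]].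
- have [S1 S2 S3] := key ha hb hc hd he hf hw u1 u2 hW.
  by split.
- have hW' : forall n, J n (w n ^+ 2 - (d n * c n ^+ 2 + e n ^+ 2 * a n - e n * b n * c n
                 + b n ^+ 2 * f n - 4 * d n * f n * a n)).
    by move=> n; have := hW n; rewrite /Wf; congr J; ring.
  have [S1 S2 S3] := key hd he hb hf hc ha hw u1 u2 hW'.
  split.
  + move=> n1 n2; apply: ztriv_ext (S3 _ n2); first by move=> n /=; ring.
    by apply: nzz_ext n1 => n /=; ring.
  + by move=> *; apply: S1.
  + move=> n1 n2; apply: ztriv_ext (S2 _ n2); first by move=> n /=; ring.
    by apply: nzz_ext n1 => n /=; ring.
- have hW' : forall n, J n (w n ^+ 2 - (f n * b n ^+ 2 + c n ^+ 2 * d n - c n * e n * b n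
                 + e n ^+ 2 * a n - 4 * f n * a n * d n)).
    by move=> n; have := hW n; rewrite /Wf; congr J; ring.
  have [S1 S2 S3] := key hf hc he ha hb hd hw u1 u2 hW'.
  split.
  + by move=> *; apply: S2.
  + move=> n1 n2; apply: ztriv_ext (S3 _ n2); first by move=> n /=; ring.
    by apply: nzz_ext n1 => n /=; ring.
  + move=> n1 n2; apply: ztriv_ext S1; by move=> n /=; ring.
Qed.



Lemma coefJ0 (c : 'I_6 -> rat) k : (k < 6)%N -> v2_zero (c (inord k)) ->
  (forall i : 'I_6, val i <> k -> v2_pos (c i)) -> forall i, J 0 (c i).
Proof.
move=> k6 h0 hp i; case: (eqVneq (val i) k) => [e|ne].
  have -> : i = inord k by apply: val_inj; rewrite /= inordK.
  exact: vz_J0.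
by apply: vp_J0; apply: hp; apply/eqP.
Qed.

Lemma coefJ1 (c : 'I_6 -> rat) k : (forall i : 'I_6, val i <> k -> v2_pos (c i)) ->
  forall i : 'I_6, val i <> k -> J 1 (c i).
Proof. by move=> h i hi; apply: vp_J1; apply: h. Qed.

Lemma zz_val (u : zseq) : ~ z2val_zero u -> ~ zzero u.
Proof. by move=> h hz; apply: h => n; apply/in2nP. Qed.

Theorem lemma4p5 (A B C D E F : 'I_6 -> rat) :
  biproj_hypersurface_smooth (Zpoly A B C D E F) ->
  plane_curve_smooth (disc_sextic A B C D E F) ->
  v2_zero (A (inord 0)) -> v2_zero (B (inord 0)) -> v2_zero (C (inord 5)) ->
  v2_zero (D (inord 3)) -> v2_zero (E (inord 3)) -> v2_zero (F (inord 5)) ->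
  (forall i : 'I_6, val i <> 0%N -> v2_pos (A i)) ->
  (forall i : 'I_6, val i <> 0%N -> v2_pos (B i)) ->
  (forall i : 'I_6, val i <> 5%N -> v2_pos (C i)) ->
  (forall i : 'I_6, val i <> 3%N -> v2_pos (D i)) ->
  (forall i : 'I_6, val i <> 3%N -> v2_pos (E i)) ->
  (forall i : 'I_6, val i <> 5%N -> v2_pos (F i)) ->
  forall (x : 'I_3 -> z2) (w : z2),
    X1_Q2_point A B C D E F x w -> alpha1_inv_zero_at A B C D E F x.
Proof.
move=> _ _ A0 B0 C5 D3 E3 F5 hA hB hC hD hE hF x w [hx hw hunit heq].
have jA := coefJ0 (isT : (0 < 6)%N) A0 hA.
have jB := coefJ0 (isT : (0 < 6)%N) B0 hB.
have jC := coefJ0 (isT : (5 < 6)%N) C5 hC.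
have jD := coefJ0 (isT : (3 < 6)%N) D3 hD.
have jE := coefJ0 (isT : (3 < 6)%N) E3 hE.
have jF := coefJ0 (isT : (5 < 6)%N) F5 hF.
pose X0 := fun n => ((x (inord 0) n)%:~R : rat).
pose X1 := fun n => ((x (inord 1) n)%:~R : rat).
pose X2 := fun n => ((x (inord 2) n)%:~R : rat).
have z0 : zok X0 by apply: zok_x.
have z1 : zok X1 by apply: zok_x.
have z2 : zok X2 by apply: zok_x.
pose ev c := fun n => qv c (X0 n) (X1 n) (X2 n).
have Eev : forall c, evalz2 (q3 c) x = ev c.
  by move=> c; apply: functional_extensionality => n; rewrite /evalz2 ev_q3.
have zev : forall c, (forall i, J 0 (c i)) -> zok (ev c) by move=> c hc; apply: zok_qv.
have hW : forall n, J n (((fun n => (w n)%:~R) : zseq) n ^+ 2 -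
   Wf (ev A n) (ev B n) (ev C n) (ev D n) (ev E n) (ev F n)).
  move=> n; have := heq n; move/in2nP; rewrite /evalz2 ev_disc !ev_q3.
  by congr J; rewrite /ev /=; field.
have U : (~ J 1 (ev A 1%N) /\ ~ J 1 (ev B 1%N)) \/ (~ J 1 (ev D 1%N) /\ ~ J 1 (ev E 1%N)) \/
  (~ J 1 (ev F 1%N) /\ ~ J 1 (ev C 1%N)).
  case: hunit => i hi.
  have xo : forall k, (k < 3)%N -> J 0 ((x (inord k) 1%N)%:~R) by move=> k _; apply: J_int.
  case: i hi => [[|[|[|//]]] pf] hi.
  - have e : Ordinal pf = inord 0 by apply: val_inj; rewrite /= inordK.
    rewrite e in hi; have u := unit_x hi.
    left; split; apply: qv_unit0 => //; try exact: xo; try exact: vz_n1; exact: coefJ1.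
  - have e : Ordinal pf = inord 1 by apply: val_inj; rewrite /= inordK.
    rewrite e in hi; have u := unit_x hi.
    right; left; split; apply: qv_unit3 => //; try exact: xo; try exact: vz_n1; exact: coefJ1.
  - have e : Ordinal pf = inord 2 by apply: val_inj; rewrite /= inordK.
    rewrite e in hi; have u := unit_x hi.
    right; right; split; apply: qv_unit5 => //; try exact: xo; try exact: vz_n1; exact: coefJ1.
have [S1 S2 S3] := all3 (zev _ jA) (zev _ jB) (zev _ jC) (zev _ jD) (zev _ jE) (zev _ jF)
  (zok_x (hw)) hW U.
have Ed : forall (c1 c2 c3 : 'I_6 -> rat), evalz2 (q3 c1 ^+ 2 - 4%:R * q3 c2 * q3 c3) x =
    (fun n => ev c1 n ^+ 2 - 4 * ev c2 n * ev c3 n).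
  move=> c1 c2 c3; apply: functional_extensionality => n.
  by rewrite /evalz2 !expr2 mevalB !mevalM rmorph_nat !ev_q3.
split; rewrite /rep_inv_zero_at Ed Eev => n1 n2; apply: ztriv_inv2.
- by apply: zok_add; [apply: zok_sq | apply: zok_opp; apply: zok_mul; [apply: zok_mul; [apply: zok_nat|]|]]; apply: zev.
- by apply: zev.
- by apply: S1; apply: zz_val.
- by apply: zok_add; [apply: zok_sq | apply: zok_opp; apply: zok_mul; [apply: zok_mul; [apply: zok_nat|]|]]; apply: zev.
- by apply: zev.
- by apply: S2; apply: zz_val.
- by apply: zok_add; [apply: zok_sq | apply: zok_opp; apply: zok_mul; [apply: zok_mul; [apply: zok_nat|]|]]; apply: zev.
- by apply: zev.
- by apply: S3; apply: zz_val.
Qed.
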